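(* Suppose each firm $i$'s payoff is $$\pi_i(\boldsymbol{x})=\alpha_0+\alpha_1x_i-\frac{\alpha_2}{2}x_i^2+\beta_1\sum_{j\ne i}x_j-\beta_2\sum_{j\ne i}x_ix_j,$$ equilibria are interior (characterized by first-order conditions), and consider two-period sequential games $\boldsymbol{n}=(n_1,n_2)$ with $n_1\ge1$, $n_2\ge0$. Suppose the Stackelberg independence property is non-trivially satisfied for all $(n_1,n_2)$, i.e. the total equilibrium quantity of the period-1 firms is independent of $n_2$ for every $n_1$ and is not identically zero (with $\alpha_1\neq 0$ and $\alpha_2\ne\beta_2$). Then $\alpha_2=2\beta_2$ and $\beta_1=0$, so that (up to the irrelevant constant $\alpha_0$) $\pi_i(\boldsymbol{x})=x_i\,a(\overline{X}_c-X)$ with $a=\beta_2$, $\overline{X}_c=\alpha_1/\beta_2$, and $X=\sum_jx_j$.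
   Context: Two-period sequential game: the $n_1$ firms of period 1 choose quantities simultaneously; the $n_2$ firms of period 2 observe the period-1 total $X_1$ and then choose simultaneously; equilibrium is subgame perfect. Stackelberg independence here means the period-1 firms' equilibrium choices do not depend on $n_2$. *)

(* Defs.v *)
From Stdlib Require Import Reals List Arith.
Open Scope R_scope.

Definition sumR (l : list nat) (f : nat -> R) : R :=
  fold_right (fun j acc => f j + acc) 0 l.

Definition others (n i : nat) : list nat :=
  filter (fun j => negb (Nat.eqb j i)) (seq 0 n).

Definition total (n : nat) (x : nat -> R) : R := sumR (seq 0 n) x.

Definition payoff (a0 a1 a2 b1 b2 : R) (n : nat) (x : nat -> R) (i : nat) : R :=
  a0 + a1 * x i - a2 / 2 * (x i) ^ 2
  + b1 * sumR (others n i) x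
  - b2 * sumR (others n i) (fun j => x i * x j).

Definition upd (x : nat -> R) (i : nat) (v : R) : nat -> R :=
  fun j => if Nat.eqb j i then v else x j.

(* In the game (n1,n2), firms 0..n1-1 move in period 1, firms n1..n1+n2-1 in
   period 2.  The full profile built from period-1 quantities y and period-2
   quantities z (only indices >= n1 of z matter). *)
Definition profile (n1 : nat) (y z : nat -> R) : nat -> R :=
  fun j => if Nat.ltb j n1 then y j else z j.

(* Period-2 strategies: sigma X1 gives the period-2 quantities after observing
   the period-1 total X1.  Equilibrium in every subgame (interior, i.e.
   characterized by the first-order conditions). *)
Definition stage2_eq (a0 a1 a2 b1 b2 : R) (n1 n2 : nat)
    (sigma : R -> nat -> R) : Prop :=
  forall (y : nat -> R) (i : nat), (n1 <= i < n1 + n2)%nat ->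
    let x := profile n1 y (sigma (total n1 y)) in
    derivable_pt_lim (fun v => payoff a0 a1 a2 b1 b2 (n1 + n2) (upd x i v) i)
      (x i) 0.

Definition spe (a0 a1 a2 b1 b2 : R) (n1 n2 : nat)
    (y : nat -> R) (sigma : R -> nat -> R) : Prop :=
  stage2_eq a0 a1 a2 b1 b2 n1 n2 sigma /\
  forall i : nat, (i < n1)%nat ->
    derivable_pt_lim
      (fun v => let y' := upd y i v in
                payoff a0 a1 a2 b1 b2 (n1 + n2)
                  (profile n1 y' (sigma (total n1 y'))) i)
      (y i) 0.

(* Main.v *)
Require Import Defs.
From Stdlib Require Import Reals List Arith Lra Lia FunctionalExtensionality Setoid Morphisms.
From Coquelicot Require Import Coquelicot.
Open Scope R_scope.

#[local] Instance dpl_proper : Proper (pointwise_relation R eq ==> eq ==> eq ==> iff) derivable_pt_lim.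
Proof. intros f g Hfg x y -> l m ->. apply functional_extensionality in Hfg. now subst. Qed.

Lemma dpl_val f x l L : derivable_pt_lim f x l -> is_derive f x L -> l = L.
Proof. intros H1 H2. apply is_derive_Reals in H2. exact (uniqueness_limite _ _ _ _ H1 H2). Qed.

Ltac getd H := eapply dpl_val in H; [| auto_derive; try exact I; try reflexivity].

Lemma caseC a0 a1 a2 b1 b2 y sigma : a1 <> 0 -> spe a0 a1 a2 b1 b2 1 1 y sigma ->
  a2 <> 0 /\ forall t, sigma t 1%nat = (a1 - b2*t)/a2.
Proof.
intros ha1 [H2 _].
assert (Hs : forall t, a2 * sigma t 1%nat = a1 - b2 * t).
{ intro t. specialize (H2 (fun _ => t) 1%nat ltac:(lia)).
  unfold payoff, others, profile, upd, total in H2. cbn in H2. getd H2.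
  replace (t+0) with t in H2 by ring. lra. }
assert (a2 <> 0). { intro E. specialize (Hs 0). rewrite E in Hs. lra. }
split; auto. intro t. rewrite <- Hs. field. auto.
Qed.

Lemma caseD a0 a1 a2 b1 b2 y sigma : a1 <> 0 -> spe a0 a1 a2 b1 b2 2 1 y sigma ->
  a2 <> 0 /\ forall t, sigma t 2%nat = (a1 - b2*t)/a2.
Proof.
intros ha1 [H2 _].
assert (Hs : forall t, a2 * sigma t 2%nat = a1 - b2 * t).
{ intro t. specialize (H2 (fun j => match j with O => t | _ => 0 end) 2%nat ltac:(lia)).
  unfold payoff, others, profile, upd, total in H2. cbn in H2. getd H2.
  replace (t+(0+0)) with t in H2 by ring. lra. }
assert (a2 <> 0). { intro E. specialize (Hs 0). rewrite E in Hs. lra. }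
split; auto. intro t. rewrite <- Hs. field. auto.
Qed.

Lemma eqA a0 a1 a2 b1 b2 y sigma : spe a0 a1 a2 b1 b2 1 0 y sigma ->
  a1 = a2 * total 1 y.
Proof.
intros [_ H1]. specialize (H1 0%nat ltac:(lia)).
unfold payoff, others, profile, upd, total in H1 |- *. cbn in H1 |- *. getd H1. lra.
Qed.

Lemma eqB a0 a1 a2 b1 b2 y sigma : spe a0 a1 a2 b1 b2 2 0 y sigma ->
  2 * a1 = (a2 + b2) * total 2 y.
Proof.
intros [_ H1]. pose proof (H1 0%nat ltac:(lia)) as E0. pose proof (H1 1%nat ltac:(lia)) as E1.
unfold payoff, others, profile, upd, total in E0, E1 |- *. cbn in E0, E1 |- *. getd E0. getd E1. lra.
Qed.

Lemma eqC a0 a1 a2 b1 b2 y sigma : a1 <> 0 -> spe a0 a1 a2 b1 b2 1 1 y sigma ->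
  a1 * a2 - a2 * a2 * total 1 y - b1 * b2 - a1 * b2 + 2 * b2 * b2 * total 1 y = 0.
Proof.
intros ha1 Hs. destruct (caseC _ _ _ _ _ _ _ ha1 Hs) as [Ha2 Hsig].
destruct Hs as [_ H1]. specialize (H1 0%nat ltac:(lia)).
unfold payoff, others, profile, upd, total in H1 |- *. cbn in H1 |- *.
setoid_rewrite Hsig in H1. getd H1.
apply (Rmult_eq_compat_l a2) in H1. field_simplify in H1; auto. field_simplify; auto. lra.
Qed.

Lemma eqD a0 a1 a2 b1 b2 y sigma : a1 <> 0 -> spe a0 a1 a2 b1 b2 2 1 y sigma ->
  2 * a1 * a2 - a2 * a2 * total 2 y - a2 * b2 * total 2 y - 2 * b1 * b2 - 2 * a1 * b2 + 3 * b2 * b2 * total 2 y = 0.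
Proof.
intros ha1 Hs. destruct (caseD _ _ _ _ _ _ _ ha1 Hs) as [Ha2 Hsig].
destruct Hs as [_ H1]. pose proof (H1 0%nat ltac:(lia)) as E0. pose proof (H1 1%nat ltac:(lia)) as E1.
unfold payoff, others, profile, upd, total in E0, E1 |- *. cbn in E0, E1 |- *.
setoid_rewrite Hsig in E0. setoid_rewrite Hsig in E1. getd E0. getd E1.
apply (Rmult_eq_compat_l a2) in E0. apply (Rmult_eq_compat_l a2) in E1.
field_simplify in E0; auto. field_simplify in E1; auto. lra.
Qed.

Lemma sumR_scal l f c : sumR l (fun j => c * f j) = c * sumR l f.
Proof. unfold sumR in *; induction l; cbn; [ring|rewrite IHl; ring]. Qed.

Lemma sumR_app l1 l2 f : sumR (l1 ++ l2) f = sumR l1 f + sumR l2 f.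
Proof. unfold sumR in *; induction l1; cbn; [ring|rewrite IHl1; ring]. Qed.

Lemma sumR_split l f i : sumR l f = sumR (filter (fun j => Nat.eqb j i) l) f
  + sumR (filter (fun j => negb (Nat.eqb j i)) l) f.
Proof. unfold sumR in *; induction l; cbn; [ring|]. destruct (Nat.eqb a i); cbn; rewrite IHl; ring. Qed.

Lemma filt_none n i : (n <= i)%nat -> filter (fun j => Nat.eqb j i) (seq 0 n) = nil.
Proof.
induction n; intros H; [reflexivity|]. rewrite seq_S, filter_app, IHn by lia. cbn.
destruct (Nat.eqb_spec n i); [lia|reflexivity].
Qed.

Lemma filt_one n i : (i < n)%nat -> filter (fun j => Nat.eqb j i) (seq 0 n) = (i :: nil).
Proof.
induction n; intros H; [lia|]. rewrite seq_S, filter_app. cbn.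
destruct (Nat.eqb_spec n i).
- subst. rewrite filt_none by lia. reflexivity.
- rewrite IHn by lia. reflexivity.
Qed.

Lemma total_split n x i : (i < n)%nat -> total n x = x i + sumR (others n i) x.
Proof.
intro H. unfold total, others. rewrite (sumR_split _ _ i), filt_one by exact H. cbn. ring.
Qed.

Theorem proposition5 (a0 a1 a2 b1 b2 : R)
  (ha1 : a1 <> 0) (ha2 : a2 <> b2) (hb2 : b2 <> 0)
  (Q : nat -> R)
  (hindep : forall n1 n2 : nat, (1 <= n1)%nat ->
     exists (y : nat -> R) (sigma : R -> nat -> R),
       spe a0 a1 a2 b1 b2 n1 n2 y sigma /\ total n1 y = Q n1)
  (hnontriv : exists n1 : nat, (1 <= n1)%nat /\ Q n1 <> 0) :
  a2 = 2 * b2 /\ b1 = 0 /\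
  (forall (n : nat) (x : nat -> R) (i : nat), (i < n)%nat ->
     payoff a0 a1 a2 b1 b2 n x i - a0 = x i * (b2 * (a1 / b2 - total n x))).
Proof.
destruct (hindep 1%nat 0%nat ltac:(lia)) as (yA & sA & HA & QA).
destruct (hindep 2%nat 0%nat ltac:(lia)) as (yB & sB & HB & QB).
destruct (hindep 1%nat 1%nat ltac:(lia)) as (yC & sC & HC & QC).
destruct (hindep 2%nat 1%nat ltac:(lia)) as (yD & sD & HD & QD).
apply eqA in HA. apply eqB in HB. apply eqC in HC; auto. apply eqD in HD; auto.
rewrite QA in HA. rewrite QB in HB. rewrite QC in HC. rewrite QD in HD.
set (Q1 := Q 1%nat) in *. set (Q2 := Q 2%nat) in *.
assert (E2 : b2 * (b1 - Q1 * (2*b2 - a2)) = 0) by (rewrite HA in HC; lra).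
assert (E4 : b2 * (2*b1 - Q2 * (2*b2 - a2)) = 0) by nra.
apply Rmult_integral in E2. destruct E2 as [E2|E2]; [contradiction|].
apply Rmult_integral in E4. destruct E4 as [E4|E4]; [contradiction|].
assert (Hk : a2 = 2 * b2).
{ destruct (Req_dec a2 (2*b2)) as [h|h]; auto. exfalso.
  assert (hk : 2*b2 - a2 <> 0) by lra.
  assert (e1 : a1 * (2*b2 - a2) = b1 * a2) by nra.
  assert (e2 : 2 * a1 * (2*b2 - a2) = 2 * b1 * (a2 + b2)) by nra.
  assert (e3 : b1 * b2 = 0) by nra.
  apply Rmult_integral in e3. destruct e3 as [e3|e3]; [|contradiction].
  rewrite e3 in e1. apply ha1. apply (Rmult_eq_reg_r (2*b2 - a2)); auto. lra. }
assert (Hb1 : b1 = 0) by (rewrite Hk in E2; lra).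
split; [exact Hk|split; [exact Hb1|]].
intros n x i Hi. rewrite (total_split n x i Hi). unfold payoff.
rewrite sumR_scal, Hk, Hb1. field. exact hb2.
Qed.
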